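(* Let $g>0$, $0<\rho_0<\rho_+$, $f,\hat f\in\mathbb{R}$, $k>0$, $a>0$, $r_0>0$, and let $c\neq 0$ satisfy $k^2c^2>f^2$. Let $m>0$ be defined by $$m^2=\frac{k^4c^2}{k^2c^2-f^2},$$ and set $$b=\frac{ma}{k},\qquad d=-\frac{fma}{k^2c}$$ (so that $ma-kb=0$, $kcd+bf=0$, $mkc^2b+mcdf=k^2c^2a$ and $b^2=a^2+d^2$). Let $s^*>0$ satisfy $m^2a^2e^{-2ms^*}<1$, and let $s^*\le s_0<s_+$. For labels $(q,r,s)\in\mathbb{R}\times[-r_0,r_0]\times[s_0,s_+]$ and time $t$, put $\theta=k(q-ct)$ and define particle positions $$x=q-be^{-ms}\sin\theta,\qquad y=r-de^{-ms}\cos\theta,\qquad z=s-ae^{-ms}\cos\theta .$$ Then: (i) the Jacobian determinant of $(q,r,s)\mapsto(x,y,z)$ equals $1-m^2a^2e^{-2ms}$, which is independent of $t$ and nonzero, so the flow is volume preserving (incompressible); (ii) the velocity field $(u,v,w)=\frac{D}{Dt}(x,y,z)=(kcbe^{-ms}\cos\theta,\,-kcde^{-ms}\sin\theta,\,-kcae^{-ms}\sin\theta)$ together with the pressure $$P=\tilde P_0-\rho_0\Big[-\tfrac12k^2c^2b^2e^{-2ms}+\tfrac12\hat f kcab\,e^{-2ms}-\tfrac12 fkcbd\,e^{-2ms}+(ca\hat f-cdf-kc^2b-ag)e^{-ms}\cos\theta+gs\Big]$$ (for any constant $\tilde P_0$) satisfies the $f$-plane Euler equations $$\tfrac{Du}{Dt}+\hat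 f w-fv=-\tfrac{1}{\rho_0}P_x,\quad \tfrac{Dv}{Dt}+fu=-\tfrac{1}{\rho_0}P_y,\quad \tfrac{Dw}{Dt}-\hat f u=-\tfrac{1}{\rho_0}P_z-g$$ in the region $\{s_0\le s\le s_+\}$; (iii) if moreover the pressure-continuity condition $$\rho_+ga=\rho_0\big(kc^2b+cdf-ca\hat f+ag\big)$$ holds, then for every constant $P_0$ the constant $\tilde P_0$ can be chosen so that $P=P_0-\rho_+gz$ on the surface $s=s_0$ (the thermocline), which is a material surface (so the kinematic condition holds there); and in this case $c$ satisfies the dispersion relation $$c^2(c^2k^2-f^2)=(c\hat f+\tilde g)^2,\qquad \tilde g=\frac{g(\rho_+-\rho_0)}{\rho_0}.$$
   Context: Setting: a fluid layer of constant density $\rho_0$ (lying above a motionless abyssal layer of constant density $\rho_+>\rho_0$, in which the pressure is hydrostatic, $P=P_0-\rho_+gz$) is described in a rotating frame with $x,y,z$ pointing east (longitude), north (latitude) and locally vertical. In the $f$-plane approximation the Coriolis parameters $f=2\Omega\sin\phi$ and $\hat f=2\Omega\cos\phi$ ($\Omega$ Earth's rotation rate, $\phi$ a fixed latitude) are treated as constants, and $g$ is gravitational acceleration. The flow is described in Lagrangian form: $(q,r,s)$ are particle labels, $D/Dt$ is the material (Lagrangian time) derivative at fixed labels, and $P_x,P_y,P_z$ are Eulerian partial derivatives of the pressure. The surface $s=s_0$ is the thermocline $z=\eta(x,y,t)$ separating the moving layer from the still layer below; the dynamic condition there is $P=P_0-\rho_+gz$ and the kinematic condition is $w=\eta_t+u\eta_x+v\eta_y$.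 *)

(* Defs.v *)
From Stdlib Require Import Reals Lra.
From Coquelicot Require Import Coquelicot.
Open Scope R_scope.

Definition theta (k c q t : R) : R := k * (q - c * t).

Definition xpos (k c m b : R) (q r s t : R) : R :=
  q - b * exp (- (m * s)) * sin (theta k c q t).
Definition ypos (k c m d : R) (q r s t : R) : R :=
  r - d * exp (- (m * s)) * cos (theta k c q t).
Definition zpos (k c m a : R) (q r s t : R) : R :=
  s - a * exp (- (m * s)) * cos (theta k c q t).

(* partial derivatives of a field F(q,r,s,t) w.r.t. labels and Lagrangian time
   (D/Dt = derivative in t at fixed labels) *)
Definition d_q (F : R -> R -> R -> R -> R) q r s t := Derive (fun q' => F q' r s t) q.
Definition d_r (F : R -> R -> R -> R -> R) q r s t := Derive (fun r' => F q r' s t) r.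
Definition d_s (F : R -> R -> R -> R -> R) q r s t := Derive (fun s' => F q r s' t) s.
Definition DDt (F : R -> R -> R -> R -> R) q r s t := Derive (fun t' => F q r s t') t.

Definition jacobian3 (X Y Z : R -> R -> R -> R -> R) q r s t : R :=
  let a11 := d_q X q r s t in let a12 := d_r X q r s t in let a13 := d_s X q r s t in
  let a21 := d_q Y q r s t in let a22 := d_r Y q r s t in let a23 := d_s Y q r s t in
  let a31 := d_q Z q r s t in let a32 := d_r Z q r s t in let a33 := d_s Z q r s t in
  a11 * (a22 * a33 - a23 * a32) - a12 * (a21 * a33 - a23 * a31)
  + a13 * (a21 * a32 - a22 * a31).

Definition pressure (rho0 g f fh k c a b d m Pt0 : R) (q r s t : R) : R :=
  Pt0 - rho0 * ( - (1/2) * k^2 * c^2 * b^2 * exp (- (2 * m * s))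
                 + (1/2) * fh * k * c * a * b * exp (- (2 * m * s))
                 - (1/2) * f * k * c * b * d * exp (- (2 * m * s))
                 + (c * a * fh - c * d * f - k * c^2 * b - a * g)
                     * exp (- (m * s)) * cos (theta k c q t)
                 + g * s).

(* (Gx,Gy,Gz) is the Eulerian gradient (P_x,P_y,P_z) of a field P given in
   Lagrangian form at label point (q,r,s,t): chain rule
   dP/dxi = P_x dx/dxi + P_y dy/dxi + P_z dz/dxi for xi = q, r, s.
   Since the Jacobian is nonzero, this determines (Gx,Gy,Gz) uniquely. *)
Definition eulerian_gradient (P X Y Z : R -> R -> R -> R -> R) q r s t
    (Gx Gy Gz : R) : Prop :=
  d_q P q r s t = Gx * d_q X q r s t + Gy * d_q Y q r s t + Gz * d_q Z q r s t /\
  d_r P q r s t = Gx * d_r X q r s t + Gy * d_r Y q r s t + Gz * d_r Z q r s t /\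
  d_s P q r s t = Gx * d_s X q r s t + Gy * d_s Y q r s t + Gz * d_s Z q r s t.

(* Main.v *)
Require Import Defs.
From Stdlib Require Import Reals Lra.
From Coquelicot Require Import Coquelicot.
Open Scope R_scope.


Lemma DDt_X k c m b q r s t : DDt (xpos k c m b) q r s t = k*c*b*exp(-(m*s))*cos(theta k c q t).
Proof. unfold DDt, xpos, theta. apply is_derive_unique. auto_derive; auto. unfold Rminus. ring. Qed.
Lemma DDt_Y k c m d q r s t : DDt (ypos k c m d) q r s t = - k*c*d*exp(-(m*s))*sin(theta k c q t).
Proof. unfold DDt, ypos, theta. apply is_derive_unique. auto_derive; auto. unfold Rminus. ring. Qed.
Lemma DDt_Z k c m a q r s t : DDt (zpos k c m a) q r s t = - k*c*a*exp(-(m*s))*sin(theta k c q t).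
Proof. unfold DDt, zpos, theta. apply is_derive_unique. auto_derive; auto. unfold Rminus. ring. Qed.
Lemma DDt_u k c m b q r s t : DDt (DDt (xpos k c m b)) q r s t = k^2*c^2*b*exp(-(m*s))*sin(theta k c q t).
Proof. unfold DDt at 1. rewrite (Derive_ext _ (fun t' => k*c*b*exp(-(m*s))*cos(theta k c q t'))) by (intros; apply DDt_X).
unfold theta. apply is_derive_unique. auto_derive; auto. unfold Rminus. ring. Qed.
Lemma DDt_v k c m d q r s t : DDt (DDt (ypos k c m d)) q r s t = k^2*c^2*d*exp(-(m*s))*cos(theta k c q t).
Proof. unfold DDt at 1. rewrite (Derive_ext _ (fun t' => - k*c*d*exp(-(m*s))*sin(theta k c q t'))) by (intros; apply DDt_Y).
unfold theta. apply is_derive_unique. auto_derive; auto. unfold Rminus. ring. Qed.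
Lemma DDt_w k c m a q r s t : DDt (DDt (zpos k c m a)) q r s t = k^2*c^2*a*exp(-(m*s))*cos(theta k c q t).
Proof. unfold DDt at 1. rewrite (Derive_ext _ (fun t' => - k*c*a*exp(-(m*s))*sin(theta k c q t'))) by (intros; apply DDt_Z).
unfold theta. apply is_derive_unique. auto_derive; auto. unfold Rminus. ring. Qed.

Lemma dq_X k c m b q r s t : d_q (xpos k c m b) q r s t = 1 - b*k*exp(-(m*s))*cos(theta k c q t).
Proof. unfold d_q, xpos, theta. apply is_derive_unique. auto_derive; auto. unfold Rminus. ring. Qed.
Lemma dr_X k c m b q r s t : d_r (xpos k c m b) q r s t = 0.
Proof. unfold d_r, xpos, theta. apply is_derive_unique. auto_derive; auto. Qed.
Lemma ds_X k c m b q r s t : d_s (xpos k c m b) q r s t = b*m*exp(-(m*s))*sin(theta k c q t).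
Proof. unfold d_s, xpos, theta. apply is_derive_unique. auto_derive; auto. unfold Rminus. ring. Qed.
Lemma dq_Y k c m d q r s t : d_q (ypos k c m d) q r s t = d*k*exp(-(m*s))*sin(theta k c q t).
Proof. unfold d_q, ypos, theta. apply is_derive_unique. auto_derive; auto. unfold Rminus. ring. Qed.
Lemma dr_Y k c m d q r s t : d_r (ypos k c m d) q r s t = 1.
Proof. unfold d_r, ypos, theta. apply is_derive_unique. auto_derive; auto. Qed.
Lemma ds_Y k c m d q r s t : d_s (ypos k c m d) q r s t = d*m*exp(-(m*s))*cos(theta k c q t).
Proof. unfold d_s, ypos, theta. apply is_derive_unique. auto_derive; auto. unfold Rminus. ring. Qed.
Lemma dq_Z k c m a q r s t : d_q (zpos k c m a) q r s t = a*k*exp(-(m*s))*sin(theta k c q t).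
Proof. unfold d_q, zpos, theta. apply is_derive_unique. auto_derive; auto. unfold Rminus. ring. Qed.
Lemma dr_Z k c m a q r s t : d_r (zpos k c m a) q r s t = 0.
Proof. unfold d_r, zpos, theta. apply is_derive_unique. auto_derive; auto. Qed.
Lemma ds_Z k c m a q r s t : d_s (zpos k c m a) q r s t = 1 + a*m*exp(-(m*s))*cos(theta k c q t).
Proof. unfold d_s, zpos, theta. apply is_derive_unique. auto_derive; auto. unfold Rminus. ring. Qed.

Lemma dq_P rho0 g f fh k c a b d m Pt0 q r s t :
  d_q (pressure rho0 g f fh k c a b d m Pt0) q r s t =
  rho0 * (c * a * fh - c * d * f - k * c^2 * b - a * g) * k * exp(-(m*s)) * sin (theta k c q t).
Proof. unfold d_q, pressure, theta. apply is_derive_unique. auto_derive; auto. unfold Rminus. ring. Qed.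
Lemma dr_P rho0 g f fh k c a b d m Pt0 q r s t :
  d_r (pressure rho0 g f fh k c a b d m Pt0) q r s t = 0.
Proof. unfold d_r, pressure, theta. apply is_derive_unique. auto_derive; auto. Qed.
Lemma ds_P rho0 g f fh k c a b d m Pt0 q r s t :
  d_s (pressure rho0 g f fh k c a b d m Pt0) q r s t =
  - rho0 * ( - 2 * m * ( - (1/2) * k^2 * c^2 * b^2 + (1/2) * fh * k * c * a * b - (1/2) * f * k * c * b * d) * exp(-(m*s)) * exp(-(m*s))
     - m * (c * a * fh - c * d * f - k * c^2 * b - a * g) * exp(-(m*s)) * cos (theta k c q t) + g).
Proof. unfold d_s, pressure, theta. apply is_derive_unique. auto_derive; auto.
replace (-(2*m*s)) with (-(m*s) + -(m*s)) by ring. rewrite exp_plus. ring. Qed.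
Lemma alg (rho0 g f fh k c a b d m E S C Px Pz : R)
  (Z1 : k*b = m*a) (Z2 : k*c*d + b*f = 0) (Z3 : b^2 = a^2 + d^2)
  (Z4 : m*k*c^2*b + m*c*d*f = k^2*c^2*a) (HSC : S^2 + C^2 = 1)
  (HJ : (1 - b*k*E*C)*(1 + a*m*E*C) - (a*k*E*S)*(b*m*E*S) <> 0)
  (e1 : rho0 * (c * a * fh - c * d * f - k * c^2 * b - a * g) * k * E * S
        = Px * (1 - b*k*E*C) + Pz * (a*k*E*S))
  (e3 : - rho0 * ( - 2 * m * ( - (1/2) * k^2 * c^2 * b^2 + (1/2) * fh * k * c * a * b - (1/2) * f * k * c * b * d) * E * E
     - m * (c * a * fh - c * d * f - k * c^2 * b - a * g) * E * C + g)
        = Px * (b*m*E*S) + Pz * (1 + a*m*E*C)) :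
  Px = - rho0 * E * S * (k^2*c^2*b - fh*k*c*a + f*k*c*d) /\
  Pz = - rho0 * (k^2*c^2*a*E*C - fh*k*c*b*E*C + g).
Proof.
  set (Qx := - rho0 * E * S * (k^2*c^2*b - fh*k*c*a + f*k*c*d)).
  set (Qz := - rho0 * (k^2*c^2*a*E*C - fh*k*c*b*E*C + g)).
  assert (f1 : rho0 * (c * a * fh - c * d * f - k * c^2 * b - a * g) * k * E * S
        = Qx * (1 - b*k*E*C) + Qz * (a*k*E*S)).
  { unfold Qx, Qz.
    assert (H3 : rho0*E*S*E*C*k^3*c^2*(b^2-a^2-d^2) = 0) by (rewrite Z3; ring).
    assert (H2 : rho0*E*S*E*C*k^2*c*d*(k*c*d+b*f) = 0) by (rewrite Z2; ring).
    assert (H1 : rho0*E*S*E*C*fh*k*c*a*(k*b-m*a) = 0) by (rewrite Z1; ring).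
    lra. }
  assert (f3 : - rho0 * ( - 2 * m * ( - (1/2) * k^2 * c^2 * b^2 + (1/2) * fh * k * c * a * b - (1/2) * f * k * c * b * d) * E * E
     - m * (c * a * fh - c * d * f - k * c^2 * b - a * g) * E * C + g)
        = Qx * (b*m*E*S) + Qz * (1 + a*m*E*C)).
  { unfold Qx, Qz.
    assert (H3 : rho0*E*E*C*C*m*k^2*c^2*(b^2-a^2-d^2) = 0) by (rewrite Z3; ring).
    assert (H2 : rho0*E*E*C*C*m*k*c*d*(k*c*d+b*f) = 0) by (rewrite Z2; ring).
    assert (H1 : rho0*E*C*fh*c*(k*b-m*a) = 0) by (rewrite Z1; ring).
    assert (H1' : rho0*E*E*C*C*m*fh*c*a*(k*b-m*a) = 0) by (rewrite Z1; ring).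
    assert (H4 : rho0*E*C*(m*k*c^2*b + m*c*d*f - k^2*c^2*a) = 0) by (rewrite Z4; ring).
    assert (H5 : rho0*E*E*m*b*(k^2*c^2*b - fh*k*c*a + f*k*c*d)*(S^2+C^2-1) = 0) by (rewrite HSC; ring).
    lra. }
  assert (Hx : (Px - Qx) * ((1 - b*k*E*C)*(1 + a*m*E*C) - (a*k*E*S)*(b*m*E*S)) = 0).
  { transitivity ((1 + a*m*E*C) * ((Px * (1 - b*k*E*C) + Pz * (a*k*E*S)) - (Qx * (1 - b*k*E*C) + Qz * (a*k*E*S)))
       - (a*k*E*S) * ((Px * (b*m*E*S) + Pz * (1 + a*m*E*C)) - (Qx * (b*m*E*S) + Qz * (1 + a*m*E*C)))).
    ring. rewrite <- e1, <- e3, <- f1, <- f3. ring. }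
  assert (Hz : (Pz - Qz) * ((1 - b*k*E*C)*(1 + a*m*E*C) - (a*k*E*S)*(b*m*E*S)) = 0).
  { transitivity ((1 - b*k*E*C) * ((Px * (b*m*E*S) + Pz * (1 + a*m*E*C)) - (Qx * (b*m*E*S) + Qz * (1 + a*m*E*C)))
       - (b*m*E*S) * ((Px * (1 - b*k*E*C) + Pz * (a*k*E*S)) - (Qx * (1 - b*k*E*C) + Qz * (a*k*E*S)))).
    ring. rewrite <- e1, <- e3, <- f1, <- f3. ring. }
  apply Rmult_integral in Hx; apply Rmult_integral in Hz.
  destruct Hx as [Hx|Hx]; [|contradiction]; destruct Hz as [Hz|Hz]; [|contradiction].
  split; lra.
Qed.
Lemma chain3 (eta etax etay etat : R -> R -> R -> R) (Xf Yf : R -> R) (t ux vy : R)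
  (Hd : forall x y t, filterdiff (fun p : R * R * R => eta (fst (fst p)) (snd (fst p)) (snd p))
             (locally (x, y, t))
             (fun h : R * R * R => etax x y t * fst (fst h) + etay x y t * snd (fst h)
                                   + etat x y t * snd h))
  (HX : is_derive Xf t ux) (HY : is_derive Yf t vy) :
  is_derive (fun t' => eta (Xf t') (Yf t') t') t
    (etat (Xf t) (Yf t) t + ux * etax (Xf t) (Yf t) t + vy * etay (Xf t) (Yf t) t).
Proof.
  assert (Hp : forall (U V : NormedModule R_AbsRing) (z : U * V),
    filterdiff (fun p : U * V => (fst p, snd p)) (locally z) (fun p : U * V => (fst p, snd p))).
  { intros. apply filterdiff_linear. apply is_linear_prod; [apply is_linear_fst | apply is_linear_snd]. }
  assert (H1 : filterdiff (fun y => (Xf y, Yf y)) (locally t) (fun y => (scal y ux, scal y vy))).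
  { apply (filterdiff_comp'_2 Xf Yf (fun a b => (a, b)) t (fun y => scal y ux) (fun y => scal y vy) (fun a b => (a,b))); auto. }
  assert (H2 : filterdiff (fun y => ((Xf y, Yf y), y)) (locally t) (fun y => ((scal y ux, scal y vy), y))).
  { apply (filterdiff_comp'_2 (fun y => (Xf y, Yf y)) (fun y => y) (fun a b => (a, b)) t _ (fun y => y) (fun a b => (a,b))); auto.
    apply filterdiff_linear, is_linear_id. }
  pose proof (filterdiff_comp' _ _ t _ _ H2 (Hd (Xf t) (Yf t) t)) as H3.
  simpl in H3.
  unfold is_derive.
  eapply filterdiff_ext_lin. exact H3.
  intros y. simpl. unfold scal; simpl. unfold mult; simpl. ring.
Qed.
Theorem mainTheorem1
  (g rho0 rhop f fh k a r0 c m b d sstar s0 splus : R)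
  (Hg : 0 < g) (Hrho0 : 0 < rho0) (Hrho : rho0 < rhop)
  (Hk : 0 < k) (Ha : 0 < a) (Hr0 : 0 < r0)
  (Hc : c <> 0) (Hkc : k^2 * c^2 > f^2)
  (Hm : 0 < m) (Hm2 : m^2 = k^4 * c^2 / (k^2 * c^2 - f^2))
  (Hb : b = m * a / k) (Hd : d = - (f * m * a) / (k^2 * c))
  (Hsstar : 0 < sstar) (Hsmall : m^2 * a^2 * exp (- (2 * m * sstar)) < 1)
  (Hs0 : sstar <= s0) (Hs0p : s0 < splus) :
  let X := xpos k c m b in
  let Y := ypos k c m d in
  let Z := zpos k c m a in
  let u := DDt X in
  let v := DDt Y in
  let w := DDt Z in
  (* (i) Jacobian: equal to 1 - m^2 a^2 e^{-2ms} (independent of t) and nonzero *)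
  (forall q r s t, Rabs r <= r0 -> s0 <= s <= splus ->
     jacobian3 X Y Z q r s t = 1 - m^2 * a^2 * exp (- (2 * m * s)) /\
     jacobian3 X Y Z q r s t <> 0)
  /\
  (* (ii) velocity field and the f-plane Euler equations *)
  (forall q r s t, Rabs r <= r0 -> s0 <= s <= splus ->
     u q r s t = k * c * b * exp (- (m * s)) * cos (theta k c q t) /\
     v q r s t = - k * c * d * exp (- (m * s)) * sin (theta k c q t) /\
     w q r s t = - k * c * a * exp (- (m * s)) * sin (theta k c q t))
  /\
  (forall Pt0 q r s t Px Py Pz, Rabs r <= r0 -> s0 <= s <= splus ->
     eulerian_gradient (pressure rho0 g f fh k c a b d m Pt0) X Y Z q r s t Px Py Pz ->
     DDt u q r s t + fh * w q r s t - f * v q r s t = - (1 / rho0) * Px /\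
     DDt v q r s t + f * u q r s t = - (1 / rho0) * Py /\
     DDt w q r s t - fh * u q r s t = - (1 / rho0) * Pz - g)
  /\
  (* (iii) pressure continuity at the thermocline s = s0 *)
  (rhop * g * a = rho0 * (k * c^2 * b + c * d * f - c * a * fh + a * g) ->
     (forall P0 : R, exists Pt0 : R,
        forall q r t, Rabs r <= r0 ->
          pressure rho0 g f fh k c a b d m Pt0 q r s0 t = P0 - rhop * g * Z q r s0 t)
     /\
     (* the surface s = s0 is material: for any differentiable eta whose graph
        z = eta(x,y,t) is the surface s = s0, the kinematic condition holds *)
     (forall (eta etax etay etat : R -> R -> R -> R),
        (forall x y t, filterdiff (fun p : R * R * R => eta (fst (fst p)) (snd (fst p)) (snd p))
             (locally (x, y, t))
             (fun h : R * R * R => etax x y t * fst (fst h) + etay x y t * snd (fst h)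
                                   + etat x y t * snd h)) ->
        (forall q r t, Rabs r <= r0 -> Z q r s0 t = eta (X q r s0 t) (Y q r s0 t) t) ->
        forall q r t, Rabs r <= r0 ->
          w q r s0 t = etat (X q r s0 t) (Y q r s0 t) t
                       + u q r s0 t * etax (X q r s0 t) (Y q r s0 t) t
                       + v q r s0 t * etay (X q r s0 t) (Y q r s0 t) t)
     /\
     (* dispersion relation *)
     c^2 * (c^2 * k^2 - f^2) = (c * fh + g * (rhop - rho0) / rho0)^2).
Proof.
  intros X Y Z u v w.
  assert (Hk0 : k <> 0) by lra.
  assert (Hden : k^2*c^2 - f^2 > 0) by lra.
  assert (Hm2' : m^2 * (k^2*c^2 - f^2) = k^4*c^2) by (rewrite Hm2; field; lra).
  assert (Z1 : k*b = m*a) by (rewrite Hb; field; auto).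
  assert (Z2 : k*c*d + b*f = 0) by (rewrite Hb, Hd; field; auto).
  assert (Hc2 : c^2 <> 0) by (apply pow_nonzero; auto).
  assert (Z3 : b^2 = a^2 + d^2).
  { assert (E : b^2 - a^2 - d^2 = a^2*(m^2*(k^2*c^2-f^2) - k^4*c^2)/(k^4*c^2)) by (rewrite Hb, Hd; field; auto).
    rewrite Hm2' in E. replace (a^2*(k^4*c^2 - k^4*c^2)/(k^4*c^2)) with 0 in E by (field; auto). lra. }
  assert (Z4 : m*k*c^2*b + m*c*d*f = k^2*c^2*a).
  { assert (E : m*k*c^2*b + m*c*d*f - k^2*c^2*a = a*(m^2*(k^2*c^2-f^2) - k^4*c^2)/(k^2)) by (rewrite Hb, Hd; field; auto).
    rewrite Hm2' in E. replace (a*(k^4*c^2 - k^4*c^2)/(k^2)) with 0 in E by (field; auto). lra. }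
  assert (Hjnz : forall s, s0 <= s -> m^2*a^2*exp(-(2*m*s)) < 1).
  { intros s Hs. apply Rle_lt_trans with (m^2*a^2*exp(-(2*m*sstar))); auto.
    apply Rmult_le_compat_l. nra.
    destruct (Req_dec s sstar) as [->|Hne]; [lra|]. left. apply exp_increasing. nra. }
  assert (HJe : forall E S C, S^2 + C^2 = 1 ->
     (1 - b*k*E*C)*(1 + a*m*E*C) - (a*k*E*S)*(b*m*E*S) = 1 - m^2*a^2*(E*E)).
  { intros E S C HSC.
    assert (F1 : E*C*(k*b - m*a) = 0) by (rewrite Z1; ring).
    assert (F2 : a*m*E*E*b*k*(S^2+C^2-1) = 0) by (rewrite HSC; ring).
    assert (F3 : a*m*E*E*(k*b - m*a) = 0) by (rewrite Z1; ring).
    lra. }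
  assert (Hee : forall s, exp(-(2*m*s)) = exp(-(m*s))*exp(-(m*s))).
  { intros s. rewrite <- exp_plus. f_equal. ring. }
  assert (HSC : forall x, sin x ^2 + cos x ^2 = 1).
  { intros x. pose proof (sin2_cos2 x). unfold Rsqr in H. lra. }
  split; [|split; [|split]].
  - intros q r s t Hr Hs.
    assert (HJ : jacobian3 X Y Z q r s t = 1 - m^2*a^2*exp(-(2*m*s))).
    { unfold jacobian3, X, Y, Z.
      rewrite dq_X, dr_X, ds_X, dq_Y, dr_Y, ds_Y, dq_Z, dr_Z, ds_Z, Hee.
      rewrite <- (HJe _ _ _ (HSC (theta k c q t))). ring. }
    split; auto. rewrite HJ. pose proof (Hjnz s (proj1 Hs)). lra.
  - intros q r s t _ _. unfold u, v, w, X, Y, Z. rewrite DDt_X, DDt_Y, DDt_Z. auto.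
  - intros Pt0 q r s t Px Py Pz _ Hs [e1 [e2 e3]].
    unfold u, v, w, X, Y, Z in *.
    rewrite dq_X, dq_Y, dq_Z, dq_P in e1.
    rewrite dr_X, dr_Y, dr_Z, dr_P in e2.
    rewrite ds_X, ds_Y, ds_Z, ds_P in e3.
    assert (HPy : Py = 0) by lra. subst Py.
    set (E := exp (-(m*s))) in *. set (S := sin (theta k c q t)) in *. set (C := cos (theta k c q t)) in *.
    assert (HJ : (1 - b*k*E*C)*(1 + a*m*E*C) - (a*k*E*S)*(b*m*E*S) <> 0).
    { rewrite HJe by apply HSC. unfold E. rewrite <- Hee. pose proof (Hjnz s (proj1 Hs)). lra. }
    destruct (alg rho0 g f fh k c a b d m E S C Px Pz Z1 Z2 Z3 Z4 (HSC _) HJ) as [HPx HPz].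
    { rewrite e1. ring. } { rewrite e3. ring. }
    rewrite DDt_u, DDt_v, DDt_w, DDt_X, DDt_Y, DDt_Z. fold E S C.
    rewrite HPx, HPz.
    split; [|split].
    + field. lra.
    + assert (F : E*C*k*c*(k*c*d + b*f) = 0) by (rewrite Z2; ring).
      replace (-(1/rho0)*0) with 0 by ring. lra.
    + field. lra.
  - intros Hpc. split; [|split].
    + intros P0. exists (P0 - rhop*g*s0 + rho0*(( - (1/2) * k^2 * c^2 * b^2
                 + (1/2) * fh * k * c * a * b - (1/2) * f * k * c * b * d) * exp (- (2 * m * s0)) + g*s0)).
      intros q r t _. unfold pressure, Z, zpos.
      set (E := exp (-(m*s0))). set (C := cos (theta k c q t)).
      assert (F : rhop*g*a*E*C = rho0 * (k * c^2 * b + c * d * f - c * a * fh + a * g)*E*C) by (rewrite Hpc; ring).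
      lra.
    + intros eta etax etay etat Hdf HZ q r t Hr.
      unfold w, u, v. unfold X, Y. rewrite DDt_X, DDt_Y. unfold DDt.
      rewrite (Derive_ext (fun t' => Z q r s0 t') (fun t' => eta (X q r s0 t') (Y q r s0 t') t'))
        by (intro; apply HZ; auto).
      apply is_derive_unique.
      apply chain3; auto.
      * unfold X, xpos, theta. auto_derive; auto. unfold Rminus. ring.
      * unfold Y, ypos, theta. auto_derive; auto. unfold Rminus. ring.
    + assert (HT : c * fh + g * (rhop - rho0) / rho0 = m*(k^2*c^2-f^2)/k^2).
      { apply (Rmult_eq_reg_r (rho0*a)); [| nra].
        transitivity (c*fh*rho0*a + rhop*g*a - rho0*g*a); [field; lra|].
        rewrite Hpc, Hb, Hd. field. auto. }
      rewrite HT. symmetry.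
      transitivity (m^2*(k^2*c^2-f^2)*(k^2*c^2-f^2)/k^4); [field; auto|].
      rewrite Hm2'. field. auto.
Qed.
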